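(* For positive scores $0<s_1\le\dots\le s_n$ and integer budget $B\ge1$, let $\mathbf h=\mathrm{RAS}(s_1,\dots,s_n;B)$. Then among all optimal allocations $\mathbf a\in\arg\min_{\mathbf a\in\mathcal A}\|\mathbf a\odot\mathbf s\|_\infty$, $\mathbf h$ minimizes the cardinality of the set $\arg\max_{i\in[n]}a_is_i$.
   Context: $\mathcal A=\{\mathbf a\in\mathbb N^n:\|\mathbf a\|_1=B\}$ ($\mathbb N$ includes $0$); $\odot$ is the entrywise product and $\mathbf e_i$ the $i$-th unit vector. RAS$(s_1,\dots,s_n;B)$ with sorted scores $s_1\le\dots\le s_n$: if $B=1$ return $\mathbf e_1$. Otherwise let $\mathbf a=\mathrm{RAS}(s_1,\dots,s_n;B-1)$; let $r=\min\{i:a_i=0\}$ if $a_n=0$, else $r=n$; let $M=\arg\min_{i\in[r]}\|(\mathbf a+\mathbf e_i)\odot\mathbf s\|_\infty$; choose any $j\in M$ minimizing the cardinality of $\arg\max_{i\in[r]}(a_i+e_{j,i})s_i$; return $\mathbf a+\mathbf e_j$. *)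

(* Defs.v *)
From HB Require Import structures.
From mathcomp Require Import all_boot all_order all_algebra.
Set Implicit Arguments. Unset Strict Implicit. Unset Printing Implicit Defensive.
Import Order.TTheory GRing.Theory Num.Theory.
Local Open Scope ring_scope.

(* Indices are 0-based: paper index i (1..n) is ordinal i-1 : 'I_n. *)
Section RASDefs.
Variables (R : realFieldType) (n : nat).
Notation alloc := {ffun 'I_n -> nat}.

Definition unitv (j : 'I_n) : alloc := [ffun i => ((i == j) : nat)].
Definition addv (a b : alloc) : alloc := [ffun i => (a i + b i)%N].
Definition l1 (a : alloc) : nat := (\sum_i a i)%N.

Variable s : 'I_n -> R.
Definition ent (a : alloc) (i : 'I_n) : R := (a i)%:R * s i.
Definition linf (a : alloc) : R := \big[Num.max/0]_i `|ent a i|.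
Definition maxr (r : nat) (a : alloc) : R :=
  \big[Num.max/0]_(i : 'I_n | (i < r)%N) `|ent a i|.
Definition argmaxr (r : nat) (a : alloc) : {set 'I_n} :=
  [set i : 'I_n | (i < r)%N && (`|ent a i| == maxr r a)].
Definition argmax (a : alloc) : {set 'I_n} := argmaxr n a.
End RASDefs.

Section RAS.
Variables (R : realFieldType) (n : nat) (s : 'I_n.+1 -> R).
Notation alloc := {ffun 'I_n.+1 -> nat}.

(* r as a count of admissible 0-based indices: paper's r = min{i : a_i = 0}
   (1-based) if a_n = 0, else n; [r] = {i0 : i0 < r}. *)
Definition rcount (a : alloc) : nat :=
  if a ord_max == 0%N then (find (fun i : 'I_n.+1 => a i == 0%N) (enum 'I_n.+1)).+1
  else n.+1.

(* RAS_out B h : h is a possible output of RAS(s;B) (for some resolution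
   of the "choose any j" nondeterminism). *)
Inductive RAS_out : nat -> alloc -> Prop :=
| RAS_base : RAS_out 1 (unitv ord0)
| RAS_step (B : nat) (a : alloc) (j : 'I_n.+1) :
    RAS_out B.+1 a ->
    (j < rcount a)%N ->
    (forall k : 'I_n.+1, (k < rcount a)%N ->
       linf s (addv a (unitv j)) <= linf s (addv a (unitv k))) ->
    (forall k : 'I_n.+1, (k < rcount a)%N ->
       linf s (addv a (unitv k)) = linf s (addv a (unitv j)) ->
       (#|argmaxr s (rcount a) (addv a (unitv j))|
          <= #|argmaxr s (rcount a) (addv a (unitv k))|)%N) ->
    RAS_out B.+2 (addv a (unitv j)).
End RAS.

(* Main.v *)
Require Import Defs.
From HB Require Import structures.
From mathcomp Require Import all_boot all_order all_algebra.
From mathcomp Require Import zify.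
Import Order.TTheory GRing.Theory Num.Theory.
Local Open Scope ring_scope.
Set Implicit Arguments. Unset Strict Implicit.

Section Aux.
Variables (R : realFieldType) (n : nat) (s : 'I_n.+1 -> R).
Hypothesis hpos : forall i, 0 < s i.

Lemma ent_ge0 (a : {ffun 'I_n.+1 -> nat}) i : 0 <= ent s a i.
Proof. by rewrite /ent mulr_ge0 // ltW. Qed.

Lemma linf_le (a : {ffun 'I_n.+1 -> nat}) (x : R) :
  0 <= x -> (forall i, ent s a i <= x) -> linf s a <= x.
Proof.
move=> x0 H; rewrite /linf; elim/big_ind: _ => //.
  by move=> u v hu hv; rewrite ge_max hu hv.
by move=> i _; rewrite ger0_norm ?ent_ge0.
Qed.

Lemma ent_le_linf (a : {ffun 'I_n.+1 -> nat}) i : ent s a i <= linf s a.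
Proof.
rewrite /linf (bigD1 i) //= le_max; apply/orP; left.
by rewrite ger0_norm ?ent_ge0.
Qed.

Lemma addvE (a : {ffun 'I_n.+1 -> nat}) j i :
  Defs.addv a (unitv j) i = (a i + (i == j))%N.
Proof. by rewrite !ffunE. Qed.

Definition Inv (h : {ffun 'I_n.+1 -> nat}) :=
  forall i, linf s h <= ((h i).+1)%:R * s i.

Lemma linf_add_le (a : {ffun 'I_n.+1 -> nat}) k :
  Inv a -> linf s (Defs.addv a (unitv k)) <= ((a k).+1)%:R * s k.
Proof.
move=> Ia; apply: linf_le; first by rewrite mulr_ge0 // ltW.
move=> i; rewrite /ent addvE; case: (eqVneq i k) => [->|ne].
  by rewrite addn1.
rewrite addn0; apply: le_trans (Ia k); exact: ent_le_linf.
Qed.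

Lemma l1_add (a : {ffun 'I_n.+1 -> nat}) j :
  l1 (Defs.addv a (unitv j)) = (l1 a + 1)%N.
Proof.
rewrite /l1 (eq_bigr (fun i => a i + (i == j)))%N; last by move=> i _; rewrite addvE.
rewrite big_split /=; congr (_ + _)%N.
rewrite (bigD1 j) //= eqxx big1 // => i /negbTE ->; done.
Qed.

Lemma nat_le_of (x y : nat) i : (x%:R * s i <= y%:R * s i) -> (x <= y)%N.
Proof. by rewrite ler_pM2r // ler_nat. Qed.
Lemma nat_lt_of (x y : nat) i : (x%:R * s i < y%:R * s i) -> (x < y)%N.
Proof. by rewrite ltr_pM2r // ltr_nat. Qed.

End Aux.

Theorem lemmaC3 (R : realFieldType) (n : nat) (s : 'I_n.+1 -> R)
  (hpos : forall i, 0 < s i)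
  (hsorted : forall i j : 'I_n.+1, (i <= j)%N -> s i <= s j)
  (B : nat) (hB : (1 <= B)%N) (h : {ffun 'I_n.+1 -> nat}) :
  RAS_out s B h ->
  [/\ l1 h = B,
      (forall a : {ffun 'I_n.+1 -> nat}, l1 a = B -> linf s h <= linf s a)
    & (forall a : {ffun 'I_n.+1 -> nat}, l1 a = B ->
         (forall b : {ffun 'I_n.+1 -> nat}, l1 b = B -> linf s a <= linf s b) ->
         (#|argmax s h| <= #|argmax s a|)%N)].
Proof.
move=> hR.
have [hl1 hI] : l1 h = B /\ Inv s h.
  elim: hR => [|B' a j _ [IHl IHI] hj hM _].
    split.
      rewrite /l1 (bigD1 ord0) //= ffunE eqxx big1 // => i /negbTE.
      by rewrite ffunE => ->.
    move=> i; apply: (@le_trans _ _ (s ord0)).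
      apply: (linf_le hpos); first exact: ltW.
      move=> k; rewrite /ent ffunE; case: (eqVneq k ord0) => [->|ne]; [by rewrite mul1r | by rewrite mul0r ltW].


    apply: (le_trans (hsorted ord0 i (leq0n i))).  
    by apply: ler_peMl; [exact: ltW | rewrite ler1n].
  split; first by rewrite l1_add IHl addn1.
  have key (k : 'I_n.+1) : (k < rcount a)%N -> linf s (Defs.addv a (unitv j)) <= ((a k).+1)%:R * s k.
    move=> hk; apply: le_trans (hM k hk) _; exact: (linf_add_le hpos).
  move=> i; rewrite addvE.
  case: (eqVneq i j) => [->|ne].
    apply: le_trans (key j hj) _.
    by rewrite ler_pM2r // ler_nat addn1.
  rewrite addn0.
  case: (ltnP i (rcount a)) => hi; first exact: key.
  move: hi; rewrite /rcount; case: ifP => ham; last first.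
    by move=> hi; have := ltn_ord i; rewrite ltnNge hi.
  set z := find _ _ => hi.
  have hex : has (fun i0 : 'I_n.+1 => a i0 == 0%N) (enum 'I_n.+1).
    by apply/hasP; exists ord_max; rewrite ?mem_enum.
  have zlt : (z < n.+1)%N by rewrite -[X in (_ < X)%N]size_enum_ord -has_find.
  pose zo := Ordinal zlt.
  have az : a zo = 0%N.
    have := nth_find ord0 hex; rewrite -/z => /eqP <-; congr (a _).
    by apply: val_inj; rewrite /= nth_enum_ord.
  have zr : (zo < rcount a)%N by rewrite /rcount ham.
  have H := key zo zr; rewrite az in H.
  apply: le_trans H _; rewrite mul1r.
  apply: le_trans (hsorted zo i (ltnW hi)) _.
  by apply: ler_peMl; [exact: ltW | rewrite ler1n].
have opt : forall a : {ffun 'I_n.+1 -> nat}, l1 a = B -> linf s h <= linf s a.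
  move=> a ha; case: (leP (linf s h) (linf s a)) => // hlt; exfalso.
  have le_ah i : (a i <= h i)%N.
    rewrite -ltnS; apply: (nat_lt_of hpos (i:=i)).
    exact: le_lt_trans (ent_le_linf hpos _ _) (lt_le_trans hlt (hI i)).
  have eq_ah : a = h.
    apply/ffunP => i; apply/eqP; rewrite eqn_leq le_ah /=; apply/negPn/negP.
    rewrite -ltnNge => lt.
    have : (l1 a < l1 h)%N.
      rewrite /l1 (bigD1 i) //= [X in (_ < X)%N](bigD1 i) //=.
      rewrite -addSn leq_add // leq_sum // => k _; exact: le_ah.
    by rewrite ha hl1 ltnn.
  by move: hlt; rewrite eq_ah ltxx.
split => // a ha aopt.
have eqT : linf s a = linf s h by apply/le_anti; rewrite opt // aopt.
have memA (x : {ffun 'I_n.+1 -> nat}) i :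
  (i \in argmax s x) = (ent s x i == linf s x).
  rewrite /argmax /argmaxr inE ltn_ord /= ger0_norm ?(ent_ge0 hpos) //.
  congr (_ == _); rewrite /maxr /linf; apply: eq_bigl => k; exact: ltn_ord.
rewrite -!sum1_card !(big_mkcond (fun i => i \in argmax s _)) /=.
rewrite -(leq_add2l (l1 h)) {1}hl1 -ha /l1 -!big_split /=.
apply: leq_sum => i _; rewrite !memA eqT.
set T := linf s h.
have F1 : (a i <= (h i).+1)%N.
  apply: (nat_le_of hpos (i:=i)); apply: le_trans (hI i).
  by rewrite -eqT; exact: (ent_le_linf hpos).
have Fh : (h i <= (h i))%N by [].
case: (eqVneq (ent s a i) T) => [EA|NA]; case: (eqVneq (ent s h i) T) => [EH|NH] /=.
- have : a i = h i.
    apply/eqP; rewrite eqn_leq; apply/andP; split;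
      apply: (nat_le_of hpos (i:=i)); rewrite -/(ent s _ i) -/(ent s _ i) EA EH //.
  by move=> ->.
- lia.
- have : (a i < h i)%N.
    apply: (nat_lt_of hpos (i:=i)); rewrite -/(ent s _ i) -/(ent s _ i) EH.
    by rewrite lt_neqAle NA /T -eqT (ent_le_linf hpos).
  lia.
- have : (a i <= h i)%N.
    rewrite -ltnS; apply: (nat_lt_of hpos (i:=i)).
    apply: lt_le_trans (hI i).
    by rewrite lt_neqAle NA /T -eqT (ent_le_linf hpos).
  lia.
Qed.
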